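(* Let $\mathfrak a=\mathbb H^p$ and $V=\mathrm{Span}(J_1,J_2,J_3)$ with $J_1=\mathrm{diag}(\lambda_1L_{\mathrm i},\dots,\lambda_pL_{\mathrm i})$, $J_2=\mathrm{diag}(\mu_1L_{\mathrm j},\dots,\mu_pL_{\mathrm j})$, $J_3=\mathrm{diag}(\mu_1L_{\mathrm k},\dots,\mu_pL_{\mathrm k})$, where all $\lambda_s,\mu_s\in\mathbb R$ are nonzero. Let $\langle\cdot,\cdot\rangle$ be an inner product on $V$ for which $J_1,J_2,J_3$ are mutually orthogonal and $\|J_2\|=\|J_3\|$. Then $(V,\langle\cdot,\cdot\rangle)$ is a WS-pair.
   Context: $\mathbb H$ denotes the quaternions, $\mathrm i,\mathrm j,\mathrm k$ the standard basis of $\mathrm{Im}\,\mathbb H$, $L_q$ left multiplication by $q$, and $\mathrm{diag}$ block-diagonal operators on $\mathbb H^p$. For a Euclidean space $\mathfrak a$, a subspace $V\subset\mathfrak{so}(\mathfrak a)$ with inner product $\langle\cdot,\cdot\rangle$ defines the metric 2-step nilpotent Lie algebra $\mathfrak n=V\oplus\mathfrak a$ (orthogonal sum, $V$ central, $\langle J,[X,Y]\rangle=\langle JX,Y\rangle$). It is a WS-pair if the corresponding simply connected nilpotent Lie group with left-invariant metric is weakly symmetric. Standing fact: this holds iff for every $J\in V$, $X\in\mathfrak a$ there is $N\in\mathcal N(V)=\{N\in O(\mathfrak a): NVN^{-1}\subset V$, $K\mapsto NKN^{-1}$ orthogonal on $(V,\langle\cdot,\cdot\rangle)\}$ with $NX=-X$,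 $NJ=-JN$. *)

(* Defs.v *)
From HB Require Import structures.
From mathcomp Require Import all_boot all_order all_algebra.
From mathcomp Require Import reals.
Set Implicit Arguments. Unset Strict Implicit. Unset Printing Implicit Defensive.
Import Order.TTheory GRing.Theory Num.Theory.
Local Open Scope ring_scope.

Section Quat.
Variable R : realType.

(* Quaternions H = R^4 with coordinates w.r.t. the basis (1, i, j, k),
   as column vectors; Hamilton product. *)
Definition qmul (q r : 'cV[R]_4) : 'cV[R]_4 :=
  let a1 := q 0 0 in let b1 := q 1 0 in let c1 := q 2%:R 0 in let d1 := q 3%:R 0 in
  let a2 := r 0 0 in let b2 := r 1 0 in let c2 := r 2%:R 0 in let d2 := r 3%:R 0 in
  \col_(t < 4)
    [:: a1*a2 - b1*b2 - c1*c2 - d1*d2;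
        a1*b2 + b1*a2 + c1*d2 - d1*c2;
        a1*c2 - b1*d2 + c1*a2 + d1*b2;
        a1*d2 + b1*c2 - c1*b2 + d1*a2]`_t.

Definition qI : 'cV[R]_4 := delta_mx 1 0.
Definition qJ : 'cV[R]_4 := delta_mx 2%:R 0.
Definition qK : 'cV[R]_4 := delta_mx 3%:R 0.

Definition Lmat (q : 'cV[R]_4) : 'M[R]_4 :=
  \matrix_(r < 4, c < 4) (qmul q (delta_mx c 0)) r 0.

Definition blockL (p : nat) (c : 'I_p -> R) (q : 'cV[R]_4) : 'M[R]_(\sum_(s < p) 4) :=
  mxdiag (fun s : 'I_p => c s *: Lmat q).

Definition span3 (n : nat) (A B C : 'M[R]_n) (K : 'M[R]_n) : Prop :=
  exists x y z : R, K = x *: A + y *: B + z *: C.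

Definition inner_product_on (n : nat) (V : 'M[R]_n -> Prop)
    (ip : 'M[R]_n -> 'M[R]_n -> R) : Prop :=
  [/\ (forall a u v w, V u -> V v -> V w -> ip (a *: u + v) w = a * ip u w + ip v w),
      (forall u v, V u -> V v -> ip u v = ip v u) &
      (forall u, V u -> u != 0 -> 0 < ip u u)].

Definition in_normalizer (n : nat) (V : 'M[R]_n -> Prop)
    (ip : 'M[R]_n -> 'M[R]_n -> R) (N : 'M[R]_n) : Prop :=
  [/\ N^T *m N = 1%:M,
      (forall K, V K -> V (N *m K *m N^T)) &
      (forall K K', V K -> V K' -> ip (N *m K *m N^T) (N *m K' *m N^T) = ip K K')].

(* WS-pair, via the standing criterion of the paper *)
Definition WS_pair (n : nat) (V : 'M[R]_n -> Prop)
    (ip : 'M[R]_n -> 'M[R]_n -> R) : Prop :=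
  forall (J : 'M[R]_n) (X : 'cV[R]_n), V J ->
    exists N, [/\ in_normalizer V ip N, N *m X = - X & N *m J = - (J *m N)].

End Quat.

(* Main.v *)
Require Import Defs.
From HB Require Import structures.
From mathcomp Require Import all_boot all_order all_algebra.
From mathcomp Require Import reals.
From mathcomp Require Import ring lra.
Import Order.TTheory GRing.Theory Num.Theory.
Local Open Scope ring_scope.

Section Q4.
Variable R : realType.

Definition qv (a b c d : R): 'cV[R]_4 := \col_(t<4) [:: a;b;c;d]`_t.
Definition mx44 (l : seq (seq R)) : 'M[R]_4 :=
  \matrix_(i < 4, j < 4) nth 0 (nth [::] l i) j.
Definition Lm (a b c d : R): 'M[R]_4 :=
  mx44 [:: [::a;-b;-c;-d]; [::b;a;-d;c]; [::c;d;a;-b]; [::d;-c;b;a]].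
Definition Rm (a b c d : R): 'M[R]_4 :=
  mx44 [:: [::a;-b;-c;-d]; [::b;a;d;-c]; [::c;-d;a;b]; [::d;c;-b;a]].
Definition hm0 (a b c d e f g h : R):= a*e - b*f - c*g - d*h.
Definition hm1 (a b c d e f g h : R):= a*f + b*e + c*h - d*g.
Definition hm2 (a b c d e f g h : R):= a*g - b*h + c*e + d*f.
Definition hm3 (a b c d e f g h : R):= a*h + b*g - c*f + d*e.
Definition nrm4 (a b c d : R):= a*a + b*b + c*c + d*d.

Ltac mxsolve := apply/matrixP; (case=> [[|[|[|[|//]]]] Hi]); (case=> [[|[|[|[|//]]]] Hj]);
  do 2 rewrite ?mxE ?big_ord_recl ?big_ord0 /= ?mxE /=; ring.
Ltac cvsolve := apply/matrixP; (case=> [[|[|[|[|//]]]] Hi]); (case=> [[|//] Hj]);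
  do 2 rewrite ?mxE ?big_ord_recl ?big_ord0 /= ?mxE /=; ring.

Lemma qvE (q : 'cV[R]_4) : q = qv (q 0 0) (q 1 0) (q 2%:R 0) (q 3%:R 0).
Proof.
apply/matrixP; (case=> [[|[|[|[|//]]]] Hi]); (case=> [[|//] Hj]); rewrite mxE /=;
  by congr (q _ _); apply: val_inj.
Qed.

Lemma Lmat_qv (a b c d : R): Lmat (qv a b c d) = Lm a b c d.
Proof. mxsolve. Qed.
Lemma qI_qv : qI R = qv 0 1 0 0. Proof. cvsolve. Qed.
Lemma qJ_qv : qJ R = qv 0 0 1 0. Proof. cvsolve. Qed.
Lemma qK_qv : qK R = qv 0 0 0 1. Proof. cvsolve. Qed.
Lemma qv0 : qv 0 0 0 0 = 0. Proof. cvsolve. Qed.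

Lemma LmT (a b c d : R): (Lm a b c d)^T = Lm a (-b) (-c) (-d). Proof. mxsolve. Qed.
Lemma LmTL (a b c d : R): (Lm a b c d)^T *m Lm a b c d = (nrm4 a b c d)%:M.
Proof. rewrite /nrm4; mxsolve. Qed.
Lemma RmTR (a b c d : R): (Rm a b c d)^T *m Rm a b c d = (nrm4 a b c d)%:M.
Proof. rewrite /nrm4; mxsolve. Qed.
Lemma LR (a b c d e f g h : R): Lm a b c d *m Rm e f g h = Rm e f g h *m Lm a b c d.
Proof. mxsolve. Qed.
Lemma nrm4M (a b c d e f g h : R):
  nrm4 (hm0 a b c d e f g h) (hm1 a b c d e f g h) (hm2 a b c d e f g h) (hm3 a b c d e f g h)
  = nrm4 a b c d * nrm4 e f g h.
Proof. rewrite /nrm4 /hm0 /hm1 /hm2 /hm3; ring. Qed.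

Lemma C1 (w2 w3 : R): Lm 0 0 w2 w3 *m Lm 0 1 0 0 *m (Lm 0 0 w2 w3)^T
  = - ((w2*w2 + w3*w3) *: Lm 0 1 0 0).
Proof. mxsolve. Qed.
Lemma C2 (w2 w3 : R): Lm 0 0 w2 w3 *m Lm 0 0 1 0 *m (Lm 0 0 w2 w3)^T
  = (w2*w2 - w3*w3) *: Lm 0 0 1 0 + (2*w2*w3) *: Lm 0 0 0 1.
Proof. mxsolve. Qed.
Lemma C3 (w2 w3 : R): Lm 0 0 w2 w3 *m Lm 0 0 0 1 *m (Lm 0 0 w2 w3)^T
  = (2*w2*w3) *: Lm 0 0 1 0 - (w2*w2 - w3*w3) *: Lm 0 0 0 1.
Proof. mxsolve. Qed.

End Q4.

Arguments qv {R}. Arguments mx44 {R}. Arguments Lm {R}. Arguments Rm {R}. Arguments hm0 {R}. Arguments hm1 {R}. Arguments hm2 {R}. Arguments hm3 {R}. Arguments nrm4 {R}.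
Ltac mxsolve := apply/matrixP; (case=> [[|[|[|[|//]]]] Hi]); (case=> [[|[|[|[|//]]]] Hj]);
  do 2 rewrite ?mxE ?big_ord_recl ?big_ord0 /= ?mxE /=; ring.
Ltac cvsolve := apply/matrixP; (case=> [[|[|[|[|//]]]] Hi]); (case=> [[|//] Hj]);
  do 2 rewrite ?mxE ?big_ord_recl ?big_ord0 /= ?mxE /=; ring.

Section Q4b.
Variable R : realType.
Definition ut0 (w2 w3 y0 y1 y2 y3 : R) :=
  hm0 (hm0 y0 (-y1) (-y2) (-y3) 0 0 w2 w3) (hm1 y0 (-y1) (-y2) (-y3) 0 0 w2 w3)
      (hm2 y0 (-y1) (-y2) (-y3) 0 0 w2 w3) (hm3 y0 (-y1) (-y2) (-y3) 0 0 w2 w3) y0 y1 y2 y3.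
Definition ut1 (w2 w3 y0 y1 y2 y3 : R) :=
  hm1 (hm0 y0 (-y1) (-y2) (-y3) 0 0 w2 w3) (hm1 y0 (-y1) (-y2) (-y3) 0 0 w2 w3)
      (hm2 y0 (-y1) (-y2) (-y3) 0 0 w2 w3) (hm3 y0 (-y1) (-y2) (-y3) 0 0 w2 w3) y0 y1 y2 y3.
Definition ut2 (w2 w3 y0 y1 y2 y3 : R) :=
  hm2 (hm0 y0 (-y1) (-y2) (-y3) 0 0 w2 w3) (hm1 y0 (-y1) (-y2) (-y3) 0 0 w2 w3)
      (hm2 y0 (-y1) (-y2) (-y3) 0 0 w2 w3) (hm3 y0 (-y1) (-y2) (-y3) 0 0 w2 w3) y0 y1 y2 y3.
Definition ut3 (w2 w3 y0 y1 y2 y3 : R) :=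
  hm3 (hm0 y0 (-y1) (-y2) (-y3) 0 0 w2 w3) (hm1 y0 (-y1) (-y2) (-y3) 0 0 w2 w3)
      (hm2 y0 (-y1) (-y2) (-y3) 0 0 w2 w3) (hm3 y0 (-y1) (-y2) (-y3) 0 0 w2 w3) y0 y1 y2 y3.

Definition Qq (w2 w3 y0 y1 y2 y3 : R) : 'M[R]_4 :=
  if nrm4 y0 y1 y2 y3 == 0 then 1%:M else (nrm4 y0 y1 y2 y3)^-1 *:
    Rm (ut0 w2 w3 y0 y1 y2 y3) (ut1 w2 w3 y0 y1 y2 y3) (ut2 w2 w3 y0 y1 y2 y3) (ut3 w2 w3 y0 y1 y2 y3).

Lemma QX_raw (w2 w3 y0 y1 y2 y3 : R) :
  Lm 0 0 w2 w3 *m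
    Rm (ut0 w2 w3 y0 y1 y2 y3) (ut1 w2 w3 y0 y1 y2 y3) (ut2 w2 w3 y0 y1 y2 y3) (ut3 w2 w3 y0 y1 y2 y3)
   *m qv y0 y1 y2 y3
  = - ((nrm4 y0 y1 y2 y3 * (w2*w2 + w3*w3)) *: qv y0 y1 y2 y3).
Proof. rewrite /ut0 /ut1 /ut2 /ut3 /nrm4 /hm0 /hm1 /hm2 /hm3; cvsolve. Qed.

Lemma nrm_ut (w2 w3 y0 y1 y2 y3 : R) :
  nrm4 (ut0 w2 w3 y0 y1 y2 y3) (ut1 w2 w3 y0 y1 y2 y3) (ut2 w2 w3 y0 y1 y2 y3) (ut3 w2 w3 y0 y1 y2 y3)
  = nrm4 y0 y1 y2 y3 * nrm4 y0 y1 y2 y3 * (w2*w2+w3*w3).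
Proof. rewrite /ut0 /ut1 /ut2 /ut3 nrm4M nrm4M /nrm4; ring. Qed.

Lemma nrm4_eq0 (y0 y1 y2 y3 : R) : nrm4 y0 y1 y2 y3 = 0 ->
  [/\ y0 = 0, y1 = 0, y2 = 0 & y3 = 0].
Proof. rewrite /nrm4 => h; split; nra. Qed.

Lemma QqT (w2 w3 y0 y1 y2 y3 : R) : w2*w2 + w3*w3 = 1 ->
  (Qq w2 w3 y0 y1 y2 y3)^T *m Qq w2 w3 y0 y1 y2 y3 = 1%:M.
Proof.
move=> nw; rewrite /Qq; case: eqP => [_|nz]; first by rewrite trmx1 mul1mx.
have trZ : forall (c : R) (A : 'M[R]_4), (c *: A)^T = c *: A^T by move=> c A; apply/matrixP=> i j; rewrite !mxE.
rewrite trZ -scalemxAl -scalemxAr RmTR nrm_ut nw mulr1 !scale_scalar_mx.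
by congr (_%:M); field; apply/eqP.
Qed.

Lemma QqC (w2 w3 y0 y1 y2 y3 a b c d : R) :
  Qq w2 w3 y0 y1 y2 y3 *m Lm a b c d = Lm a b c d *m Qq w2 w3 y0 y1 y2 y3.
Proof.
rewrite /Qq; case: eqP => [_|nz]; first by rewrite mul1mx mulmx1.
by rewrite -scalemxAl -scalemxAr LR.
Qed.

Lemma QqX (w2 w3 y0 y1 y2 y3 : R) : w2*w2 + w3*w3 = 1 ->
  Lm 0 0 w2 w3 *m Qq w2 w3 y0 y1 y2 y3 *m qv y0 y1 y2 y3 = - qv y0 y1 y2 y3.
Proof.
move=> nw; rewrite /Qq; case: eqP => [/nrm4_eq0 [-> -> -> ->]|nz].
  by rewrite qv0 mulmx0 oppr0.
rewrite -scalemxAr -scalemxAl QX_raw nw mulr1 scalerN scalerA mulVf ?scale1r //.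
exact/eqP.
Qed.

Definition Qof (w2 w3 : R) (Y : 'cV[R]_4) := Qq w2 w3 (Y 0 0) (Y 1 0) (Y 2%:R 0) (Y 3%:R 0).
Definition Mof (w2 w3 : R) (Y : 'cV[R]_4) := Lm 0 0 w2 w3 *m Qof w2 w3 Y.

Lemma MT (w2 w3 : R) Y : w2*w2 + w3*w3 = 1 -> (Mof w2 w3 Y)^T *m Mof w2 w3 Y = 1%:M.
Proof.
move=> nw; rewrite /Mof trmx_mul -!mulmxA (mulmxA _ (Lm _ _ _ _)) LmTL.
have -> : nrm4 0 0 w2 w3 = 1 by rewrite /nrm4 -nw; ring.
by rewrite mul1mx; apply: QqT.
Qed.

Lemma Mconj (w2 w3 : R) Y (a b c d : R) : w2*w2 + w3*w3 = 1 ->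
  Mof w2 w3 Y *m Lm a b c d *m (Mof w2 w3 Y)^T
  = Lm 0 0 w2 w3 *m Lm a b c d *m (Lm 0 0 w2 w3)^T.
Proof.
move=> nw; have QQ := mulmx1C (QqT w2 w3 (Y 0 0) (Y 1 0) (Y 2%:R 0) (Y 3%:R 0) nw).
rewrite /Mof /Qof trmx_mul !mulmxA -(mulmxA (Lm 0 0 w2 w3)) QqC mulmxA.
by rewrite -(mulmxA (Lm 0 0 w2 w3 *m Lm a b c d)) QQ mulmx1.
Qed.

Lemma MX (w2 w3 : R) Y : w2*w2 + w3*w3 = 1 -> Mof w2 w3 Y *m Y = - Y.
Proof.
move=> nw; have h := QqX w2 w3 (Y 0 0) (Y 1 0) (Y 2%:R 0) (Y 3%:R 0) nw.
by rewrite -qvE in h.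
Qed.

End Q4b.
Arguments qv {R}. Arguments mx44 {R}. Arguments Lm {R}. Arguments Rm {R}. Arguments nrm4 {R}.
Arguments Qof {R}. Arguments Mof {R}.

Lemma mxdiag_mul (R : pzSemiRingType) (p : nat) (p_ : 'I_p -> nat)
  (A B : forall i, 'M[R]_(p_ i)) :
  mxdiag A *m mxdiag B = mxdiag (fun i => A i *m B i).
Proof.
have -> : mxdiag B = \mxblock_(i, j) (if i == j then conform_mx 0 (B i) else 0) by [].
rewrite mul_mxdiag_mxblock /mxdiag; apply: eq_mxblock => i j.
by case: eqVneq => [<-|]; rewrite ?conform_mx_id ?mulmx0.
Qed.

Lemma mxdiag_scale (R : comPzRingType) (p : nat) (p_ : 'I_p -> nat)
  (a : R) (A : forall i, 'M[R]_(p_ i)) :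
  a *: mxdiag A = mxdiag (fun i => a *: A i).
Proof.
rewrite -mul_scalar_mx -(mxdiagZ (p_ := p_)) mxdiag_mul.
by apply: eq_mxdiag => i; rewrite mul_scalar_mx.
Qed.

Section Lin.
Variable R : realType.
Variable n : nat.
Implicit Types A B C N K : 'M[R]_n.

Lemma conjN N A B C (al be a b c : R) :
  N *m A *m N^T = - A -> N *m B *m N^T = al *: B + be *: C ->
  N *m C *m N^T = be *: B - al *: C ->
  N *m (a *: A + b *: B + c *: C) *m N^T
  = (-a) *: A + (al*b + be*c) *: B + (be*b - al*c) *: C.
Proof.
move=> hA hB hC.
rewrite !mulmxDr !mulmxDl -!scalemxAr -!scalemxAl hA hB hC.
by apply/matrixP => i j; rewrite !mxE; ring.
Qed.

Lemma ip_expand (ip : 'M[R]_n -> 'M[R]_n -> R) A B C :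
  inner_product_on (span3 A B C) ip ->
  ip A B = 0 -> ip A C = 0 -> ip B C = 0 ->
  forall a b c a' b' c',
  ip (a *: A + b *: B + c *: C) (a' *: A + b' *: B + c' *: C)
  = a * a' * ip A A + b * b' * ip B B + c * c' * ip C C.
Proof.
move=> [Hl Hs _] oAB oAC oBC.
have inV : forall a b c, span3 A B C (a *: A + b *: B + c *: C).
  by move=> a b c; exists a, b, c.
have VA : span3 A B C A by exists 1, 0, 0; rewrite !scale0r !addr0 scale1r.
have VB : span3 A B C B by exists 0, 1, 0; rewrite !scale0r addr0 add0r scale1r.
have VC : span3 A B C C by exists 0, 0, 1; rewrite !scale0r !add0r scale1r.
have V0 : span3 A B C 0 by exists 0, 0, 0; rewrite !scale0r !addr0.
have VbC : forall b c, span3 A B C (b *: B + c *: C).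
  by move=> b c; exists 0, b, c; rewrite scale0r add0r.
have VcC : forall c, span3 A B C (c *: C).
  by move=> c; exists 0, 0, c; rewrite !scale0r !add0r.
have ip0 : forall W, span3 A B C W -> ip 0 W = 0.
  move=> W VW; have := Hl 1 0 0 W V0 V0 VW.
  rewrite scaler0 addr0 mul1r => h.
  by apply: (addrI (ip 0 W)); rewrite addr0 -h.
have lin1 : forall a b c W, span3 A B C W ->
    ip (a *: A + b *: B + c *: C) W = a * ip A W + b * ip B W + c * ip C W.
  move=> a b c W VW; rewrite -addrA (Hl _ _ _ _ VA (VbC b c) VW).
  rewrite (Hl _ _ _ _ VB (VcC c) VW) -[c *: C]addr0 (Hl _ _ _ _ VC V0 VW) ip0 //.
  by rewrite addr0 !addrA.
move=> a b c a' b' c'.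
rewrite (lin1 _ _ _ _ (inV a' b' c')).
rewrite (Hs _ _ VA (inV a' b' c')) (Hs _ _ VB (inV a' b' c')) (Hs _ _ VC (inV a' b' c')).
rewrite (lin1 _ _ _ _ VA) (lin1 _ _ _ _ VB) (lin1 _ _ _ _ VC).
rewrite (Hs _ _ VB VA) (Hs _ _ VC VA) (Hs _ _ VC VB) oAB oAC oBC; ring.
Qed.
End Lin.
Arguments qv {R}. Arguments mx44 {R}. Arguments Lm {R}. Arguments Rm {R}. Arguments nrm4 {R}.
Arguments Qof {R}. Arguments Mof {R}.

Lemma exists_w (R : realType) (y z : R) : exists w2 w3 : R,
  [/\ w2*w2 + w3*w3 = 1, y*(w2*w2-w3*w3) + z*(2*w2*w3) = -y
    & y*(2*w2*w3) - z*(w2*w2-w3*w3) = -z].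
Proof.
case: (eqVneq (y*y+z*z) 0) => [h|h].
  have y0 : y = 0 by nra.
  have z0 : z = 0 by nra.
  by exists 1, 0; rewrite y0 z0; split; ring.
pose t := (Num.sqrt (y*y+z*z))^-1.
have ht : t*t*(y*y+z*z) = 1.
  rewrite /t -invfM -expr2 sqr_sqrtr ?mulVf //; nra.
exists (-z*t), (y*t); split.
- by rewrite -ht; ring.
- by transitivity (-y * (t*t*(y*y+z*z))); [ring | rewrite ht mulr1].
- by transitivity (-z * (t*t*(y*y+z*z))); [ring | rewrite ht mulr1].
Qed.

Theorem mainTheorem4 (R : realType) (p : nat) (lam mu : 'I_p -> R)
  (ip : 'M[R]_(\sum_(s < p) 4) -> 'M[R]_(\sum_(s < p) 4) -> R) :
  (forall s, lam s != 0) -> (forall s, mu s != 0) ->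
  let J1 := blockL lam (qI R) in
  let J2 := blockL mu (qJ R) in
  let J3 := blockL mu (qK R) in
  let V := span3 J1 J2 J3 in
  inner_product_on V ip ->
  ip J1 J2 = 0 -> ip J1 J3 = 0 -> ip J2 J3 = 0 ->
  ip J2 J2 = ip J3 J3 ->
  WS_pair V ip.
Proof.
move=> _ _ J1 J2 J3 V hip o12 o13 o23 n23 J X [x [y [z ->]]].
have [w2 [w3 [nw e1 e2]]] := exists_w _ y z.
set al := w2*w2 - w3*w3 in e1 e2.
set be := 2*w2*w3 in e1 e2.
have hab : al*al + be*be = 1.
  by rewrite /al /be; transitivity ((w2*w2+w3*w3)^+2); [ring | rewrite nw expr1n].
pose N := mxdiag (fun s : 'I_p => Mof w2 w3 (submxcol (p_ := fun _ : 'I_p => 4) X s)).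
have NtN : N^T *m N = 1%:M.
  rewrite tr_mxdiag mxdiag_mul -(mxdiagZ (p_ := fun _ : 'I_p => 4)).
  by apply: eq_mxdiag => s; apply: MT.
have conj_gen : forall (c : 'I_p -> R) (a b cc d : R),
    N *m mxdiag (fun s => c s *: Lm a b cc d) *m N^T
    = mxdiag (fun s => c s *: (Lm 0 0 w2 w3 *m Lm a b cc d *m (Lm 0 0 w2 w3)^T)).
  move=> c a b cc d; rewrite tr_mxdiag !mxdiag_mul; apply: eq_mxdiag => s.
  by rewrite -scalemxAr -scalemxAl Mconj.
have hJ1 : N *m J1 *m N^T = - J1.
  rewrite /J1 /blockL qI_qv Lmat_qv conj_gen -mxdiagN; apply: eq_mxdiag => s.
  by rewrite C1 nw scale1r scalerN.
have hJ2 : N *m J2 *m N^T = al *: J2 + be *: J3.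
  rewrite /J2 /J3 /blockL qJ_qv qK_qv !Lmat_qv conj_gen !mxdiag_scale -mxdiagD.
  apply: eq_mxdiag => s; rewrite C2 -/al -/be.
  by apply/matrixP => i j; rewrite !mxE; ring.
have hJ3 : N *m J3 *m N^T = be *: J2 - al *: J3.
  rewrite /J2 /J3 /blockL qJ_qv qK_qv !Lmat_qv conj_gen !mxdiag_scale -mxdiagB.
  apply: eq_mxdiag => s; rewrite C3 -/al -/be.
  by apply/matrixP => i j; rewrite !mxE; ring.
have hJ : N *m (x *: J1 + y *: J2 + z *: J3) *m N^T = - (x *: J1 + y *: J2 + z *: J3).
  rewrite (conjN _ _ _ _ _ _ al be) //.
  have -> : al*y + be*z = -y by rewrite -e1; ring.
  have -> : be*y - al*z = -z by rewrite -e2; ring.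
  by apply/matrixP => i j; rewrite !mxE; ring.
exists N; split.
- split => //.
  + move=> K [a [b [c ->]]].
    by exists (-a), (al*b + be*c), (be*b - al*c); apply: (conjN _ _ _ _ _ _ al be).
  + move=> K K' [a [b [c ->]]] [a' [b' [c' ->]]].
    rewrite !(conjN _ _ _ _ _ _ al be) // !ip_expand // -n23.
    apply/eqP; rewrite -subr_eq0; apply/eqP.
    transitivity ((b*b' + c*c') * ip J2 J2 * (al*al + be*be - 1)); first by ring.
    by rewrite hab subrr mulr0.
- have hX : X = \mxcol_s submxcol (p_ := fun _ : 'I_p => 4) X s by rewrite submxcolK.
  rewrite hX /N mul_mxdiag_mxcol -mxcolN; apply: eq_mxcol => s.
  by apply: MX.
- rewrite -[N *m _]mulmx1 -NtN mulmxA hJ mulNmx.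
  done.
Qed.
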